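(* Let $(X,\|\cdot\|)$ be a normed linear space and let $I$ be a non-trivial admissible ideal in $\mathbb{N}$. A sequence $x=\{x_k\}_{k\in\mathbb{N}}$ in $X$ is $I$-statistically bounded if and only if there exists a real number $r>0$ such that $I\text{-}st\text{-}\mathrm{LIM}_x^r\ne\emptyset$.
   Context: An ideal $I$ in $\mathbb{N}$ is a family of subsets of $\mathbb{N}$ containing $\emptyset$, closed under finite unions and under taking subsets; it is non-trivial if $\mathbb{N}\notin I$ and admissible if $\{n\}\in I$ for every $n$. A sequence $x$ in $X$ is $I$-statistically bounded if there exists $G>0$ such that for every $\delta>0$, $\{n\in\mathbb{N}:\frac1n|\{k\le n:\|x_k\|\ge G\}|\ge\delta\}\in I$. For $r\ge0$, $x$ is $r$-$I$-statistically convergent to $\xi$ if for every $\varepsilon>0$ and $\delta>0$, $\{n\in\mathbb{N}:\frac1n|\{k\le n:\|x_k-\xi\|\ge r+\varepsilon\}|\ge\delta\}\in I$; $I\text{-}st\text{-}\mathrm{LIM}_x^r$ is the set of all such $\xi$. *)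

(* Defs.v *)
From HB Require Import structures.
From mathcomp Require Import all_boot all_order all_algebra.
From mathcomp Require Import all_classical all_reals.
From mathcomp Require Import topology normedtype.
Set Implicit Arguments. Unset Strict Implicit. Unset Printing Implicit Defensive.
Import Order.TTheory GRing.Theory Num.Theory.
Import numFieldNormedType.Exports.
Local Open Scope classical_set_scope.
Local Open Scope ring_scope.

(* Convention: the paper's N = {1,2,...} is represented by nat via n <-> n.+1.
   So the natural number n : nat stands for the paper's index n+1, and the
   sequence x : nat -> X has x k standing for the paper's x_{k+1}. *)

Definition is_ideal (I : set (set nat)) : Prop :=
  [/\ I set0,
      (forall A B, I A -> I B -> I (A `|` B)) &
      (forall A B, B `<=` A -> I A -> I B)].

Definition nontrivial_ideal (I : set (set nat)) : Prop := ~ I setT.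

Definition admissible_ideal (I : set (set nat)) : Prop :=
  forall n : nat, I [set n].

Definition density_set {R : realType} (P : nat -> bool) (delta : R) : set nat :=
  [set n : nat | delta <= (#|[set k : 'I_n.+1 | P (nat_of_ord k)]|%:R / n.+1%:R)].

Definition I_stat_bounded {R : realType} {X : normedModType R}
  (I : set (set nat)) (x : nat -> X) : Prop :=
  exists G : R, 0 < G /\
    forall delta : R, 0 < delta ->
      I (density_set (fun k => G <= `|x k|) delta).

Definition r_I_stat_conv {R : realType} {X : normedModType R}
  (I : set (set nat)) (r : R) (x : nat -> X) (xi : X) : Prop :=
  forall eps delta : R, 0 < eps -> 0 < delta ->
    I (density_set (fun k => r + eps <= `|x k - xi|) delta).

Definition I_st_LIM {R : realType} {X : normedModType R}
  (I : set (set nat)) (r : R) (x : nat -> X) : set X :=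
  [set xi | r_I_stat_conv I r x xi].

(* Main.v *)
Require Import Defs.
From HB Require Import structures.
From mathcomp Require Import all_boot all_order all_algebra.
From mathcomp Require Import all_classical all_reals.
From mathcomp Require Import topology normedtype.
Import Order.TTheory GRing.Theory Num.Theory.
Import numFieldNormedType.Exports.
Local Open Scope classical_set_scope.
Local Open Scope ring_scope.

Lemma density_mono (R : realType) (P Q : nat -> bool) (d : R) :
  (forall k, P k -> Q k) -> density_set P d `<=` density_set Q d.
Proof.
move=> PQ n; rewrite /density_set /= => H.
apply: (le_trans H); apply: ler_wpM2r; first by rewrite invr_ge0 ler0n.
rewrite ler_nat; apply: subset_leq_card; apply/fintype.subsetP => k.
rewrite !in_setE /=; exact: PQ.
Qed.

Theorem theorem3p7 (R : realType) (X : normedModType R) (I : set (set nat))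
  (hI : is_ideal I) (hnt : nontrivial_ideal I) (hadm : admissible_ideal I)
  (x : nat -> X) :
  I_stat_bounded I x <-> exists r : R, 0 < r /\ I_st_LIM I r x !=set0.
Proof.
case: hI => _ _ hsub; split.
- move=> [G [G0 HG]]; exists G; split => //; exists 0; rewrite /I_st_LIM /=.
  move=> eps delta e0 d0; apply: (hsub _ _ _ (HG delta d0)).
  apply: density_mono => k /=; rewrite subr0 => H.
  apply: le_trans H; by rewrite lerDl ltW.
- move=> [r [r0 [xi Hxi]]]; exists (r + 1 + `|xi|); split.
    have h1 : 0 < r + 1 := addr_gt0 r0 ltr01.
    have h3 : r + 1 <= r + 1 + `|xi| by rewrite lerDl normr_ge0.
    exact: (lt_le_trans h1 h3).
  move=> delta d0; apply: (hsub _ _ _ (Hxi 1 delta ltr01 d0)).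
  apply: density_mono => k /= H.
  have h2 : `|x k| - `|xi| <= `|x k - xi| := lerB_dist (x k) xi.
  apply: (le_trans _ h2); rewrite lerBrDr; exact: H.
Qed.
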